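(* Let $1\le n<N$. Then for all $\epsilon>0$, \[ \Pr\Big(\max_{n\le k\le N-1}\frac{\sum_{t=1}^k (X_t-\mu)}{k}\ge \epsilon\Big)\le \exp\Big(-\frac{2n\epsilon^2}{(1-n/N)(1+1/n)(b-a)^2}\Big), \] and \[ \Pr\Big(\max_{1\le k\le n}\frac{\sum_{t=1}^k (X_t-\mu)}{N-k}\ge \frac{n\epsilon}{N-n}\Big)\le \exp\Big(-\frac{2n\epsilon^2}{(1-(n-1)/N)(b-a)^2}\Big). \]
   Context: Let $N\ge 2$ and let $\mathcal X=(x_1,\dots,x_N)$ be a finite population of real numbers (repetitions allowed). Let $(X_1,\dots,X_N)=(x_{\pi(1)},\dots,x_{\pi(N)})$, where $\pi$ is a uniformly random permutation of $\{1,\dots,N\}$. For $n\le N$, $(X_1,\dots,X_n)$ is therefore a sample of size $n$ drawn uniformly without replacement from $\mathcal X$. Let $\mu=\frac1N\sum_{i=1}^N x_i$, $a=\min_i x_i$ and $b=\max_i x_i$. *)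

(* Defs.v *)
From Stdlib Require Import Reals ClassicalEpsilon.
From mathcomp Require Import all_boot all_fingroup.
Set Implicit Arguments. Unset Strict Implicit. Unset Printing Implicit Defensive.
Open Scope R_scope.

Definition pbool (P : Prop) : bool :=
  if excluded_middle_informative P then true else false.

(* Probability of an event E under a uniformly random permutation of 'I_N:
   (number of permutations satisfying E) / N!. *)
Definition Prob (N : nat) (E : {perm 'I_N} -> Prop) : R :=
  (INR #|[pred s : {perm 'I_N} | pbool (E s)]| / INR (N`!)).

Definition pmean (N : nat) (x : 'I_N -> R) : R :=
  (\big[Rplus/0]_(i : 'I_N) x i / INR N).

(* Centered partial sum: sum_{t=1}^k (X_t - mu) with X_t = x (s (t-1)). *)
Definition psum (N : nat) (x : 'I_N -> R) (s : {perm 'I_N}) (k : nat) : R :=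
  \big[Rplus/0]_(i : 'I_N | (i < k)%N) (x (s i) - pmean x).

(* Main.v *)
Require Import Defs.
From Stdlib Require Import Reals Lra Psatz.
From Coquelicot Require Import Coquelicot.
Open Scope R_scope.

Lemma mono_deriv (f df : R -> R) (t : R) : 0 <= t ->
  (forall x, is_derive f x (df x)) -> (forall x, 0 <= x -> 0 <= df x) -> f 0 <= f t.
Proof.
intros Ht Hd Hp.
destruct (MVT_gen f 0 t df) as [c [Hc E]].
- intros y _; apply Hd.
- intros y _. apply continuity_pt_filterlim. apply (ex_derive_continuous (K:=R_AbsRing) (V:=R_NormedModule)). exists (df y). apply Hd.
- rewrite Rmin_left in Hc by lra. rewrite Rmax_right in Hc by lra.
  assert (0 <= df c * (t - 0)) by (apply Rmult_le_pos; [apply Hp; lra| lra]). lra.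
Qed.

Section H.
Variables al be : R.
Hypothesis Hal : al <= 0.
Hypothesis Hbe : 0 <= be.
Hypothesis Hab : al < be.
Let w := be - al.
Definition PP l := be * exp (l * al) / (be - al).
Definition QQ l := - al * exp (l * be) / (be - al).
Definition AA l := PP l + QQ l.
Definition A1 l := al * PP l + be * QQ l.

Lemma PP_ge0 l : 0 <= PP l.
Proof. unfold PP. apply Rmult_le_pos; [apply Rmult_le_pos; [lra| left; apply exp_pos]|].
left; apply Rinv_0_lt_compat; lra. Qed.
Lemma QQ_ge0 l : 0 <= QQ l.
Proof. unfold QQ. apply Rmult_le_pos; [apply Rmult_le_pos; [lra| left; apply exp_pos]|].
left; apply Rinv_0_lt_compat; lra. Qed.
Lemma AA_pos l : 0 < AA l.
Proof.
unfold AA, PP, QQ. rewrite <- Rdiv_plus_distr. apply Rdiv_lt_0_compat; [|lra].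
assert (H1 := exp_pos (l*al)). assert (H2 := exp_pos (l*be)).
destruct (Rle_lt_or_eq_dec 0 be Hbe).
- assert (0 < be * exp (l*al)) by (apply Rmult_lt_0_compat; lra).
  assert (0 <= - al * exp (l*be)) by (apply Rmult_le_pos; lra). lra.
- subst. assert (0 < - al * exp (l*0)) by (apply Rmult_lt_0_compat; lra). lra.
Qed.

Lemma dPP l : is_derive PP l (al * PP l).
Proof. unfold PP. auto_derive; [auto|]. field. lra. Qed.
Lemma dQQ l : is_derive QQ l (be * QQ l).
Proof. unfold QQ. auto_derive; [auto|]. field. lra. Qed.

Lemma AA_bound l : 0 <= l -> AA l <= exp (l^2 * (be - al)^2 / 8).
Proof.
intros Hl.
set (q := fun l => l * (be - al)^2 / 4 - A1 l / AA l).
assert (Hq : forall y, 0 <= y -> 0 <= q y).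
{ intros y Hy. replace 0 with (q 0).
  2:{ unfold q, A1, AA, PP, QQ. rewrite !Rmult_0_l, exp_0.
      assert (E : be * 1 / (be - al) + - al * 1 / (be - al) = 1) by (field; lra).
      rewrite E. field; lra. }
  apply (mono_deriv q (fun y => (be-al)^2/4 - (PP y * QQ y * (be-al)^2) / (AA y)^2)); auto.
  - intro z. assert (HA := AA_pos z). unfold AA, PP, QQ in HA. unfold q, A1, AA, PP, QQ.
    assert (HA2 : 0 < be * exp (z * al) + - al * exp (z * be)).
    { replace (be * exp (z * al) + - al * exp (z * be)) with ((be * exp (z * al) / (be - al) + - al * exp (z * be) / (be - al)) * (be-al)) by (field; lra). apply Rmult_lt_0_compat; lra. }
    auto_derive. all: try (repeat split; auto; lra). unfold PP, QQ, AA. field. split; lra.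
  - intros z _. assert (HA := AA_pos z). assert (HP:=PP_ge0 z). assert (HQ:=QQ_ge0 z).
    unfold AA in *.
    assert (PP z * QQ z * (be - al) ^ 2 / (PP z + QQ z) ^ 2 <= (be - al) ^ 2 / 4).
    { assert (K : PP z * QQ z * (be-al)^2 <= (be-al)^2/4 * (PP z + QQ z)^2).
      { assert (0 <= (be-al)^2 * (PP z - QQ z)^2) by (apply Rmult_le_pos; apply pow2_ge_0). nra. }
      apply Rmult_le_reg_r with ((PP z + QQ z)^2). nra.
      replace (PP z * QQ z * (be - al) ^ 2 / (PP z + QQ z) ^ 2 * (PP z + QQ z) ^ 2) with (PP z * QQ z * (be - al) ^ 2) by (field; lra).
      lra. }
    lra. }
set (g := fun l => - (AA l * exp (- (l^2 * (be - al)^2 / 8)))).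
assert (Hg : g 0 <= g l).
{ apply (mono_deriv g (fun y => AA y * q y * exp (- (y^2 * (be - al)^2 / 8)))); auto.
  - intro z. assert (HA := AA_pos z). unfold AA, PP, QQ in HA. unfold g, q, A1, AA, PP, QQ.
    assert (HA2 : 0 < be * exp (z * al) + - al * exp (z * be)).
    { replace (be * exp (z * al) + - al * exp (z * be)) with ((be * exp (z * al) / (be - al) + - al * exp (z * be) / (be - al)) * (be-al)) by (field; lra). apply Rmult_lt_0_compat; lra. }
    auto_derive. all: try (repeat split; auto; lra). unfold PP, QQ, AA.
    replace (- (z * (z * 1) * ((be - al) * ((be - al) * 1)) * / 8)) with (- (z ^ 2 * (be - al) ^ 2 / 8)) by field.
    field. split; lra.
  - intros z Hz. apply Rmult_le_pos; [apply Rmult_le_pos|left; apply exp_pos].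
    left; apply AA_pos. apply Hq; auto. }
unfold g in Hg.
assert (E0 : AA 0 = 1). { unfold AA, PP, QQ. rewrite !Rmult_0_l, exp_0. field. lra. }
rewrite E0 in Hg. replace (- (0^2 * (be-al)^2/8)) with 0 in Hg by field. rewrite exp_0 in Hg.
assert (HE := exp_pos (l ^ 2 * (be - al) ^ 2 / 8)).
assert (AA l * exp (- (l ^ 2 * (be - al) ^ 2 / 8)) <= 1) by lra.
rewrite exp_Ropp in H.
apply Rmult_le_reg_r with (/ exp (l ^ 2 * (be - al) ^ 2 / 8)).
apply Rinv_0_lt_compat; auto. rewrite Rinv_r by lra. auto.
Qed.
End H.

Lemma exp_convex (l al be v : R) : al < be -> al <= v <= be ->
  exp (l * v) <= ((be - v) * exp (l * al) + (v - al) * exp (l * be)) / (be - al).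
Proof.
intros Hab Hv.
set (t := (v - al) / (be - al)).
assert (Ht0 : 0 <= t) by (unfold t; apply Rdiv_le_0_compat; lra).
assert (Ht1 : t <= 1).
{ unfold t. replace 1 with ((be-al)/(be-al)) by (field; lra). apply Rmult_le_compat_r. left; apply Rinv_0_lt_compat; lra. lra. }
set (z := l * v).
assert (E1 : exp (l * al) = exp z * exp (l * al - z)) by (rewrite <- exp_plus; f_equal; ring).
assert (E2 : exp (l * be) = exp z * exp (l * be - z)) by (rewrite <- exp_plus; f_equal; ring).
assert (I1 := exp_ineq1_le (l * al - z)).
assert (I2 := exp_ineq1_le (l * be - z)).
assert (Hz := exp_pos z).
assert (K1 : exp z * (1 + (l * al - z)) <= exp (l * al)) by (rewrite E1; apply Rmult_le_compat_l; lra).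
assert (K2 : exp z * (1 + (l * be - z)) <= exp (l * be)) by (rewrite E2; apply Rmult_le_compat_l; lra).
replace (((be - v) * exp (l * al) + (v - al) * exp (l * be)) / (be - al)) with
  ((1 - t) * exp (l * al) + t * exp (l * be)) by (unfold t; field; lra).
assert (H3 : (1 - t) * (exp z * (1 + (l * al - z))) + t * (exp z * (1 + (l * be - z))) = exp z).
{ unfold z, t. field. lra. }
assert ((1 - t) * (exp z * (1 + (l * al - z))) <= (1-t) * exp (l*al)) by (apply Rmult_le_compat_l; lra).
assert (t * (exp z * (1 + (l * be - z))) <= t * exp (l*be)) by (apply Rmult_le_compat_l; lra).
lra.
Qed.

From HB Require Import structures.
From mathcomp Require Import all_boot all_fingroup zify.
Open Scope R_scope.
HB.instance Definition _ := Monoid.isComLaw.Build R 0 Rplus (fun a b c => esym (Rplus_assoc a b c)) Rplus_comm Rplus_0_l.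
HB.instance Definition _ := Monoid.isMulLaw.Build R 0 Rmult Rmult_0_l Rmult_0_r.
HB.instance Definition _ := Monoid.isAddLaw.Build R Rmult Rplus Rmult_plus_distr_r Rmult_plus_distr_l.

Lemma iter_Rplus n c : iter n (Rplus c) 0 = INR n * c.
Proof. elim: n => [|n IH]; first by rewrite /= Rmult_0_l. rewrite iterS IH S_INR; ring. Qed.

Lemma sumR_const (I : finType) (P : pred I) c : \big[Rplus/0]_(i | P i) c = INR #|P| * c.
Proof. by rewrite (big_const 0 Rplus P) iter_Rplus. Qed.

Lemma INR_sum (I : finType) (P : pred I) (f : I -> nat) :
  INR (\sum_(i | P i) f i)%N = \big[Rplus/0]_(i | P i) INR (f i).
Proof. by apply: (big_morph INR plus_INR). Qed.

Lemma sumR_le (I : finType) (P : pred I) (f g : I -> R) :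
  (forall i, P i -> f i <= g i) ->
  \big[Rplus/0]_(i | P i) f i <= \big[Rplus/0]_(i | P i) g i.
Proof.
move=> H; apply: (big_ind2 (fun x y => x <= y)) => //; first lra.
by move=> ? ? ? ? ? ?; lra.
Qed.

Lemma hoeff_sum (I : finType) (P : pred I) (v : I -> R) al be l :
  al < be -> 0 <= l -> (forall i, P i -> al <= v i <= be) ->
  \big[Rplus/0]_(i | P i) v i = 0 ->
  \big[Rplus/0]_(i | P i) exp (l * v i) <= INR #|P| * exp (l^2 * (be - al)^2 / 8).
Proof.
move=> Hab Hl Hv Hs.
have [P0|Ppos] := posnP #|P|.
  rewrite big_pred0; last by move=> i; apply/negbTE; rewrite -[P i]/(i \in P) (card0_eq P0).
  rewrite P0 /=; lra.
have HP : 0 < INR #|P| by apply: lt_0_INR; apply/ltP.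
have Hal : al <= 0.
  have : \big[Rplus/0]_(i | P i) al <= \big[Rplus/0]_(i | P i) v i by apply: sumR_le => i /Hv; lra.
  rewrite Hs sumR_const => H.
  by apply: (Rmult_le_reg_l (INR #|P|)) => //; lra.
have Hbe : 0 <= be.
  have : \big[Rplus/0]_(i | P i) v i <= \big[Rplus/0]_(i | P i) be by apply: sumR_le => i /Hv; lra.
  rewrite Hs sumR_const => H.
  by apply: (Rmult_le_reg_l (INR #|P|)) => //; lra.
set k := (exp (l * be) - exp (l * al)) / (be - al).
apply: (Rle_trans _ (\big[Rplus/0]_(i | P i) (AA al be l + k * v i))).
  apply: sumR_le => i /Hv Hi.
  apply: (Rle_trans _ _ _ (exp_convex l al be (v i) Hab Hi)).
  rewrite /AA /PP /QQ /k; right; field; lra.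
rewrite big_split /= -big_distrr /= Hs sumR_const Rmult_0_r Rplus_0_r.
apply: Rmult_le_compat_l; first lra.
exact: AA_bound.
Qed.

Lemma pboolP (P : Prop) : reflect P (pbool P).
Proof. rewrite /pbool; case: ClassicalEpsilon.excluded_middle_informative => H; by constructor. Qed.

Lemma exp_mono x y : x <= y -> exp x <= exp y.
Proof. move=> H; case: (Rle_lt_or_eq_dec _ _ H) => [/exp_increasing|->]; lra. Qed.

Section Core.
Variable N : nat.
Variable d : 'I_N -> R.

Definition sg (s : {perm 'I_N}) : seq 'I_N := [seq s i | i <- enum 'I_N].

Lemma size_sg s : size (sg s) = N.
Proof. by rewrite /sg size_map size_enum_ord. Qed.

Lemma uniq_sg s : uniq (sg s).
Proof. by rewrite /sg map_inj_uniq ?enum_uniq //; apply: perm_inj. Qed.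

Lemma part m p (Q : pred {perm 'I_N}) : (m < N)%N -> size p = m ->
  #|[pred s | (take m (sg s) == p) && Q s]| =
  (\sum_(i : 'I_N) #|[pred s | (take m.+1 (sg s) == rcons p i) && Q s]|)%N.
Proof.
move=> Hm Hp.
pose x0 := Ordinal Hm.
rewrite -sum1_card (partition_big (fun s => nth x0 (sg s) m) xpredT) //=.
apply: eq_bigr => i _; rewrite -sum1_card; apply: eq_bigl => s.
rewrite !inE (take_nth x0) ?size_sg // eqseq_rcons.
by case: (take m (sg s) == p); case: (Q s); case: (nth x0 (sg s) m == i).
Qed.

Lemma map_tperm_eq (i j : 'I_N) (u w : seq 'I_N) :
  ([seq tperm i j k | k <- u] == w) = (u == [seq tperm i j k | k <- w]).
Proof.
by apply/eqP/eqP => [<-|->]; rewrite (mapK (tpermK i j)).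
Qed.

Lemma sym p i j : i \notin p -> j \notin p ->
  #|[pred s | take (size p).+1 (sg s) == rcons p i]| =
  #|[pred s | take (size p).+1 (sg s) == rcons p j]|.
Proof.
move=> Hi Hj.
rewrite -!sum1_card (reindex_inj (mulIg (tperm i j))) /=.
apply: eq_bigl => s; rewrite !inE.
have -> : sg (s * tperm i j) = [seq tperm i j k | k <- sg s].
  rewrite /sg; elim: (enum 'I_N) => //= k r ->; by rewrite permM.
rewrite -map_take map_tperm_eq map_rcons tpermL.
congr (_ == rcons _ _).
rewrite -[RHS]map_id; apply/eq_in_map => k Hk /=.
apply: tpermD; apply/eqP => E; subst k; [by rewrite Hk in Hi | by rewrite Hk in Hj].
Qed.

Lemma zero p i : i \in p ->
  #|[pred s | take (size p).+1 (sg s) == rcons p i]| = 0%N.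
Proof.
move=> Hi; rewrite -sum1_card big_pred0 // => s; rewrite inE.
apply/negP => /eqP E.
have := take_uniq (size p).+1 (uniq_sg s).
by rewrite E rcons_uniq Hi.
Qed.

Lemma part0 m p : (m < N)%N -> size p = m ->
  #|[pred s | take m (sg s) == p]| =
  (\sum_(i : 'I_N) #|[pred s | take m.+1 (sg s) == rcons p i]|)%N.
Proof.
move=> Hm Hp.
pose x0 := Ordinal Hm.
rewrite -sum1_card (partition_big (fun s => nth x0 (sg s) m) xpredT) //=.
apply: eq_bigr => i _; rewrite -sum1_card; apply: eq_bigl => s.
rewrite !inE (take_nth x0) ?size_sg // eqseq_rcons.
by case: (take m (sg s) == p); case: (nth x0 (sg s) m == i).
Qed.

Variables lo hi : R.
Hypothesis Hd : forall i, lo <= d i <= hi.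
Hypothesis Hlh : lo < hi.
Hypothesis Hsum : \big[Rplus/0]_(i : 'I_N) d i = 0.
Variable M : nat.
Hypothesis HM : (M < N)%N.
Variables c l : R.
Hypothesis Hl : 0 <= l.

Definition Ps s k := \big[Rplus/0]_(i <- take k (sg s)) d i.
Definition EvF m s : Prop := exists k, (m < k <= M)%N /\ Ps s k / INR (N - k) >= c.
Definition Cn (p : seq 'I_N) := #|[pred s : {perm 'I_N} | take (size p) (sg s) == p]|.
Definition Bn (p : seq 'I_N) :=
  #|[pred s : {perm 'I_N} | (take (size p) (sg s) == p) && pbool (EvF (size p) s)]|.
Fixpoint Sf m := match m with 0%N => 0 | m'.+1 => Sf m' + 1 / INR (N - m) ^ 2 end.
Definition KK := (hi - lo)^2/8.
Definition G m z := exp (l * (z / INR (N - m)) - l^2 * KK * Sf m - l * c + l^2 * KK * Sf M).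

Lemma inv_sq_ge0 x : 0 <= 1 / x ^ 2.
Proof.
case: (Req_dec x 0) => [->|H].
  by rewrite /Rdiv /= Rmult_0_l Rinv_0; lra.
apply: Rdiv_le_0_compat; first lra. apply: pow2_gt_0 => //.
Qed.

Lemma Sf_mono m m' : (m <= m')%N -> Sf m <= Sf m'.
Proof.
move=> H; rewrite -(subnKC H); elim: (m' - m)%N => [|k IH]; rewrite ?addn0; first lra.
rewrite addnS. change (Sf (m+k).+1) with (Sf (m+k) + 1 / INR (N - (m+k).+1) ^ 2).
have := inv_sq_ge0 (INR (N - (m + k).+1)). lra.
Qed.

Lemma KK_ge0 : 0 <= KK.
Proof. rewrite /KK; have := pow2_ge_0 (hi - lo); lra. Qed.

Lemma sum_notin p : uniq p ->
  \big[Rplus/0]_(i | i \notin p) d i = - \big[Rplus/0]_(i <- p) d i.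
Proof.
move=> Hu. have := Hsum. rewrite (bigID (fun i => i \in p)) /= -big_uniq // => H.
apply: (Rplus_eq_reg_l (\big[Rplus/0]_(i <- p) d i)). rewrite Rplus_opp_r. exact H.
Qed.

Lemma card_notin p : uniq p -> #|[pred i : 'I_N | i \notin p]| = (N - size p)%N.
Proof.
move=> Hu. have H := cardC (mem p). rewrite card_ord (card_uniqP Hu) in H.
move: H; set k2 := #|[predC _]| => H.
 apply: (@addnI (size p)); rewrite H subnKC //.
by rewrite -(card_uniqP Hu) -[X in (_ <= X)%N](card_ord N) max_card.
Qed.

Lemma hstep p : uniq p -> ((size p).+1 < N)%N ->
  \big[Rplus/0]_(i | i \notin p) G (size p).+1 (\big[Rplus/0]_(k <- p) d k + d i)
  <= INR #|[pred i : 'I_N | i \notin p]| * G (size p) (\big[Rplus/0]_(k <- p) d k).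
Proof.
move=> Hu Hm.
set m := size p. set z := \big[Rplus/0]_(k <- p) d k.
set r1 := INR (N - m.+1).
have Hr1 : 0 < r1 by apply: lt_0_INR; apply/ltP; rewrite subn_gt0.
have Er : INR (N - m) = r1 + 1.
  rewrite /r1 -S_INR; congr INR; rewrite subnS prednK // subn_gt0; exact: ltnW.
have Ecard : INR #|[pred i : 'I_N | i \notin p]| = r1 + 1 by rewrite card_notin // Er.
pose v i := (z + d i) / r1 - z / (r1 + 1).
have EG : forall i, G m.+1 (z + d i) = G m z * exp (- (l^2 * KK / r1^2)) * exp (l * v i).
  move=> i; rewrite /G -!exp_plus; congr exp.
  rewrite /= Er -/r1 /v. field. lra.
rewrite (eq_bigr _ (fun i _ => EG i)) -big_distrr /=.
rewrite Ecard.
set al := (z + lo) / r1 - z / (r1 + 1).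
set be := (z + hi) / r1 - z / (r1 + 1).
have Hab : al < be.
  rewrite /al /be. apply: Rplus_lt_compat_r. apply: Rmult_lt_compat_r.
  by apply: Rinv_0_lt_compat. lra.
have Hv : forall i, i \notin p -> al <= v i <= be.
  move=> i _; have := Hd i => -[H1 H2]; rewrite /al /be /v; split;
  apply: Rplus_le_compat_r; apply: Rmult_le_compat_r;
  [left; apply: Rinv_0_lt_compat => //| lra | left; apply: Rinv_0_lt_compat => // | lra].
have Hs : \big[Rplus/0]_(i | i \notin p) v i = 0.
  have Ev : forall i, v i = (z / r1 - z / (r1 + 1)) + d i * / r1.
    by move=> i; rewrite /v; field; lra.
  rewrite (eq_bigr _ (fun i _ => Ev i)) big_split /= -big_distrl /= sum_notin //.
  rewrite sumR_const (_ : INR #|_| = r1 + 1); last first.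
    rewrite -Ecard; congr INR; apply: eq_card => i; by rewrite !inE.
  rewrite -/z; field; lra.
have H := @hoeff_sum _ (fun i => i \notin p) v al be l Hab Hl Hv Hs.
rewrite (_ : INR #|_| = r1 + 1) in H; last first.
  rewrite -Ecard; congr INR; apply: eq_card => i; by rewrite !inE.
have Ew : (be - al) ^ 2 = (hi - lo) ^ 2 / r1 ^ 2.
  rewrite /be /al; field; lra.
rewrite Ew in H.
have HG := exp_pos (- (l ^ 2 * KK / r1 ^ 2)).
have HG2 : 0 <= G m z by left; apply: exp_pos.
apply: (Rle_trans _ (G m z * exp (- (l ^ 2 * KK / r1 ^ 2)) *
   ((r1 + 1) * exp (l ^ 2 * ((hi - lo) ^ 2 / r1 ^ 2) / 8)))).
  apply: Rmult_le_compat_l; [apply: Rmult_le_pos; left; apply: exp_pos | exact H].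
have -> : G m z * exp (- (l ^ 2 * KK / r1 ^ 2)) *
   ((r1 + 1) * exp (l ^ 2 * ((hi - lo) ^ 2 / r1 ^ 2) / 8)) =
   (r1 + 1) * G m z * (exp (- (l ^ 2 * KK / r1 ^ 2)) * exp (l ^ 2 * ((hi - lo) ^ 2 / r1 ^ 2) / 8)) by ring.
rewrite -exp_plus.
have -> : - (l ^ 2 * KK / r1 ^ 2) + l ^ 2 * ((hi - lo) ^ 2 / r1 ^ 2) / 8 = 0.
  rewrite /KK; field; lra.
rewrite exp_0; lra.
Qed.

Lemma pbool_iff (A B : Prop) : (A <-> B) -> pbool A = pbool B.
Proof. move=> H; case: pboolP => HA; case: pboolP => HB //; tauto. Qed.

Lemma EvF_M s : ~ EvF M s.
Proof. move=> [k [/andP [H1 H2] _]]; have := leq_ltn_trans H2 H1; by rewrite ltnn. Qed.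

Lemma EvF_step m s : (m < M)%N ->
  (EvF m s <-> (Ps s m.+1 / INR (N - m.+1) >= c \/ EvF m.+1 s)).
Proof.
move=> Hm; split.
  move=> [k [/andP [H1 H2] H3]].
  case: (eqVneq k m.+1) => [Ek|Nk]; first by left; rewrite -Ek.
  right; exists k; split => //; apply/andP; split => //.
  by rewrite ltn_neqAle eq_sym Nk H1.
case=> [H|[k [/andP [H1 H2] H3]]].
  by exists m.+1; split => //; apply/andP; split.
exists k; split => //; apply/andP; split => //; exact: ltnW.
Qed.

Lemma G_ge1 m z : (m <= M)%N -> z / INR (N - m) >= c -> 1 <= G m z.
Proof.
move=> Hm Hz. rewrite -exp_0. apply: exp_mono.
have H1 := Sf_mono m M Hm. have H2 := KK_ge0.
have H3 : 0 <= l * (z / INR (N - m) - c) by apply: Rmult_le_pos; lra.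
have H4 : 0 <= l^2 * KK * (Sf M - Sf m) by apply: Rmult_le_pos; [apply: Rmult_le_pos => //; apply: pow2_ge_0|lra].
lra.
Qed.

Lemma core j : forall p, uniq p -> (size p + j)%N = M ->
  INR (Bn p) <= INR (Cn p) * G (size p) (\big[Rplus/0]_(i <- p) d i).
Proof.
elim: j => [|j IH] p Hu Hs.
  rewrite addn0 in Hs.
  rewrite /Bn (_ : #|_| = 0%N); last first.
    rewrite -sum1_card big_pred0 // => s; rewrite inE Hs.
    case: pboolP => [H|_]; [by case: (EvF_M s H) | by rewrite andbF].
  rewrite /=; apply: Rmult_le_pos; [apply: pos_INR | left; apply: exp_pos].
have Hm : (size p < M)%N by rewrite -Hs addnS ltnS leq_addr.
have Hm1 : ((size p).+1 < N)%N := leq_ltn_trans Hm HM.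
have Hm0 : (size p < N)%N := ltnW Hm1.
set m := size p. set z := \big[Rplus/0]_(i <- p) d i.
pose Bi i := #|[pred s | (take m.+1 (sg s) == rcons p i) && pbool (EvF m s)]|.
pose Cr i := #|[pred s | take m.+1 (sg s) == rcons p i]|.
have EB : Bn p = (\sum_i Bi i)%N by rewrite /Bn (part m p (fun s => pbool (EvF m s)) Hm0 erefl).
have EC : Cn p = (\sum_i Cr i)%N by rewrite /Cn (part0 m p Hm0 erefl).
have BC : forall i, (Bi i <= Cr i)%N.
  move=> i; apply: subset_leq_card; apply/subsetP => s; rewrite !inE; by case/andP.
have Hper : forall i, INR (Bi i) <= INR (Cr i) * G m.+1 (z + d i).
  move=> i. case: (boolP (i \in p)) => Hip.
    have E0 : Cr i = 0%N by exact: zero.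
    have := BC i; rewrite E0 leqn0 => /eqP ->; rewrite /=; lra.
  have Huq : uniq (rcons p i) by rewrite rcons_uniq Hip Hu.
  have Ez : \big[Rplus/0]_(k <- rcons p i) d k = z + d i by rewrite big_rcons.
  case: (Rge_dec ((z + d i) / INR (N - m.+1)) c) => Hc.
    have HG := G_ge1 m.+1 (z + d i) Hm Hc.
    apply: (Rle_trans _ (INR (Cr i))); first by apply: le_INR; apply/leP.
    have := pos_INR (Cr i). nra.
  have EBi : Bi i = Bn (rcons p i).
    rewrite /Bi /Bn size_rcons; apply: eq_card => s; rewrite !inE.
    case E: (take m.+1 (sg s) == rcons p i) => //=.
    apply: pbool_iff. rewrite (EvF_step m s Hm).
    have -> : Ps s m.+1 = z + d i by rewrite /Ps (eqP E) Ez.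
    split; [case => //|by right].
  have ECi : Cr i = Cn (rcons p i) by rewrite /Cn size_rcons.
  have := IH (rcons p i) Huq; rewrite size_rcons Ez addSnnS => /(_ Hs).
  by rewrite -EBi -ECi.
have [i0 Hi0] : exists i0, i0 \notin p.
  case: (pickP (fun i => i \notin p)) => [i0 H|H]; first by exists i0.
  have : (N <= size p)%N.
    rewrite -[X in (X <= _)%N](card_ord N) -(card_uniqP Hu); apply: subset_leq_card.
    by apply/subsetP => i _; move: (H i) => /= /negbFE.
  by rewrite leqNgt Hm0.
have Ecr : forall i, i \notin p -> Cr i = Cr i0.
  move=> i Hi; exact: sym.
have Ecr0 : forall i, i \in p -> Cr i = 0%N.
  move=> i Hi; exact: zero.
have ECR : INR (Cn p) = INR #|[pred i : 'I_N | i \notin p]| * INR (Cr i0).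
  rewrite EC INR_sum (bigID (fun i => i \in p)) /= big1 ?Rplus_0_l; last first.
    by move=> i Hi; rewrite Ecr0.
  rewrite (eq_bigr (fun _ => INR (Cr i0))); last by move=> i Hi; rewrite Ecr.
  rewrite sumR_const; congr (INR _ * _); apply: eq_card => i; by rewrite !inE.
rewrite EB INR_sum ECR.
apply: (Rle_trans _ (\big[Rplus/0]_i (INR (Cr i) * G m.+1 (z + d i)))).
  by apply: sumR_le => i _; apply: Hper.
rewrite (bigID (fun i => i \in p)) /= big1 ?Rplus_0_l; last first.
  by move=> i Hi; rewrite Ecr0 // Rmult_0_l.
rewrite (eq_bigr (fun i => INR (Cr i0) * G m.+1 (z + d i))); last by move=> i Hi; rewrite Ecr.
rewrite -big_distrr /=.
have H := hstep p Hu Hm1. rewrite -/m -/z in H.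
have HC := pos_INR (Cr i0).
apply: (Rle_trans _ (INR (Cr i0) * (INR #|[pred i : 'I_N | i \notin p]| * G m z))).
  by apply: Rmult_le_compat_l.
right; rewrite -Rmult_assoc (Rmult_comm (INR (Cr i0))); reflexivity.
Qed.

End Core.

Lemma psum_Ps N (x : 'I_N -> R) s k : (k <= N)%N ->
  psum x s k = Ps N (fun i => x i - pmean x) s k.
Proof.
move=> Hk. rewrite /Ps /sg -map_take big_map.
have -> : take k (enum 'I_N) = [seq i : 'I_N <- enum 'I_N | (i < k)%N].
  apply: (@inj_map _ _ (@nat_of_ord N) val_inj). rewrite map_take val_enum_ord take_iota (minn_idPl Hk).
  rewrite (@eq_filter _ _ (preim (@nat_of_ord N) (fun j => (j < k)%N))) // -filter_map val_enum_ord.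
  exact/esym/(filter_iota_ltn 0 Hk).
rewrite big_filter /psum.
by rewrite big_enum_cond.
Qed.

Lemma Prob_zero N (E : {perm 'I_N} -> Prop) : (forall s, ~ E s) -> Prob E = 0.
Proof.
move=> H; rewrite /Prob (_ : #|_| = 0%N) /=; first by rewrite /Rdiv Rmult_0_l.
rewrite -sum1_card big_pred0 // => s; rewrite inE; by case: pboolP => // /H.
Qed.

Lemma Sf_pos N M : (1 <= M)%N -> (M < N)%N -> 0 < Sf N M.
Proof.
move=> H1 H2. apply: (Rlt_le_trans _ (Sf N 1)); last exact: Sf_mono.
change (Sf N 1) with (0 + 1 / INR (N - 1) ^ 2). rewrite Rplus_0_l.
apply: Rdiv_lt_0_compat; first lra.
have : 0 < INR (N - 1) by apply: lt_0_INR; apply/ltP; lia.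
move=> H; apply: pow_lt H.
Qed.

Lemma gen N (x : 'I_N -> R) a b M c : (0 < N)%N -> a < b -> (forall i, a <= x i <= b) ->
  (1 <= M)%N -> (M < N)%N -> 0 < c ->
  Prob (fun s : {perm 'I_N} => exists k, (1 <= k <= M)%N /\ psum x s k / INR (N - k) >= c)
  <= exp (- (2 * c ^ 2 / ((b - a) ^ 2 * Sf N M))).
Proof.
move=> HN Hab Hx HM1 HM Hc.
set mu := pmean x.
pose d := fun i => x i - mu.
have Hd : forall i, a - mu <= d i <= b - mu by move=> i; have := Hx i; rewrite /d; lra.
have Hlh : a - mu < b - mu by lra.
have HN' : 0 < INR N by apply: lt_0_INR; apply/ltP.
have Hsum : \big[Rplus/0]_(i < N) d i = 0.
  rewrite /d /Rminus big_split /= sumR_const.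
  have -> : #|(fun _ : 'I_N => true)| = N by rewrite -[RHS](card_ord N); apply: eq_card.
  rewrite /mu /pmean.
  have E : forall y, y + INR N * - (y / INR N) = 0 by move=> y; field; lra.
  apply: E.
have HS := Sf_pos N M HM1 HM.
set S := Sf N M.
set KK0 := KK (a - mu) (b - mu).
have HK : 0 < KK0 by rewrite /KK0 /KK; have := pow2_gt_0 (b - mu - (a - mu)); lra.
pose l := c / (2 * KK0 * S).
have HKS : 0 < 2 * KK0 * S by apply: Rmult_lt_0_compat; [apply: Rmult_lt_0_compat; lra | exact HS].
have Hl : 0 <= l by rewrite /l; apply: Rdiv_le_0_compat; lra.
have Hcore := core N d (a - mu) (b - mu) Hd Hlh Hsum M HM c l Hl M [::] (erefl _) (erefl _).
rewrite /= big_nil in Hcore.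
have EC : Cn N [::] = N`!.
  rewrite /Cn -card_Sn; apply: eq_card => s; by rewrite !inE take0.
have EB : Bn N d M c [::] = #|[pred s : {perm 'I_N} | pbool (exists k, (1 <= k <= M)%N /\ psum x s k / INR (N - k) >= c)]|.
  rewrite /Bn; apply: eq_card => s; rewrite !inE take0 eqxx /=.
  apply: pbool_iff; rewrite /EvF; split => -[k [Hk H]]; exists k; split => //;
  rewrite ?psum_Ps // in H *; lia.
rewrite EC in Hcore.
have Hf : 0 < INR N`! by apply: lt_0_INR; apply/ltP; apply: fact_gt0.
rewrite /Prob -EB.
apply: (Rle_trans _ (G N (a - mu) (b - mu) M c l 0 0)).
  apply: (Rmult_le_reg_r (INR N`!)) => //. rewrite /Rdiv Rmult_assoc Rinv_l; lra.
rewrite /G; apply: exp_mono.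
rewrite /= -/KK0 -/S /l /KK0 /KK.
have -> : b - a = b - mu - (a - mu) by ring.
rewrite /KK0 /KK in HK.
have HS' : S <> 0 by rewrite /S; lra.
have HN0 : INR (N - 0) <> 0 by rewrite subn0; lra.
have Hba : b - mu - (a - mu) <> 0 by lra.
right; field; repeat split; auto.
Qed.

Fixpoint Tf (p L : nat) : R :=
  match L with 0%N => 0 | L'.+1 => Tf p L' + 1 / INR (p + L') ^ 2 end.

Lemma Tf_bottom p L : Tf p L.+1 = 1 / INR p ^ 2 + Tf p.+1 L.
Proof.
elim: L => [|L IH]; first by rewrite /= addn0; ring.
change (Tf p L.+2) with (Tf p L.+1 + 1 / INR (p + L.+1) ^ 2).
change (Tf p.+1 L.+1) with (Tf p.+1 L + 1 / INR (p.+1 + L) ^ 2).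
by rewrite IH addnS -addSn; ring.
Qed.

Lemma Sf_Tf N m : (m <= N)%N -> Sf N m = Tf (N - m) m.
Proof.
elim: m => [|m IH] H; first by [].
change (Sf N m.+1) with (Sf N m + 1 / INR (N - m.+1) ^ 2).
rewrite IH; last exact: ltnW.
rewrite Tf_bottom (_ : (N - m.+1).+1 = N - m)%N; last by lia.
ring.
Qed.

Lemma Tf_bound p L : (1 <= p)%N ->
  Tf p L <= INR L * (INR p + 1) / ((INR p + INR L) * INR p ^ 2).
Proof.
move=> Hp.
have HP : 1 <= INR p by rewrite -/(INR 1); apply: le_INR; apply/leP.
elim: L => [|L IH]; first by rewrite /= /Rdiv !Rmult_0_l; lra.
change (Tf p L.+1) with (Tf p L + 1 / INR (p + L) ^ 2).
rewrite plus_INR S_INR.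
have Hl := pos_INR L.
set P := INR p in HP IH *. set l := INR L in Hl IH *.
have E : (l + 1) * (P + 1) / ((P + (l + 1)) * P ^ 2) -
   (l * (P + 1) / ((P + l) * P ^ 2) + 1 / (P + l) ^ 2) =
   l / (P * (P + l) ^ 2 * (P + l + 1)).
  field; repeat split; lra.
have : 0 <= l / (P * (P + l) ^ 2 * (P + l + 1)).
  apply: Rdiv_le_0_compat => //.
  apply: Rmult_lt_0_compat; [apply: Rmult_lt_0_compat; [lra|apply: pow_lt; lra]|lra].
lra.
Qed.

Lemma pmean_opp N (x : 'I_N -> R) : pmean (fun i => - x i) = - pmean x.
Proof.
rewrite /pmean -(big_morph Ropp Ropp_plus_distr Ropp_0).
have E : forall y, - y / INR N = - (y / INR N) by move=> y; rewrite /Rdiv; ring.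
apply: E.
Qed.

Lemma rev_psum N (x : 'I_N -> R) (s : {perm 'I_N}) m : (0 < N)%N -> (m <= N)%N ->
  psum (fun i => - x i) (perm (@rev_ord_inj N) * s)%g m = psum x s (N - m).
Proof.
move=> NP Hm. rewrite /psum pmean_opp.
set mu := pmean x.
pose D j := x (s j) - mu.
have E1 : forall i, - x ((perm (@rev_ord_inj N) * s)%g i) - - mu = - D (rev_ord i).
  move=> i; rewrite permM permE /D /=.
  have E : forall u v : R, - u - - v = - (u - v) by move=> u v; ring.
  apply: E.
rewrite (eq_bigr _ (fun i _ => E1 i)).
rewrite -(big_morph Ropp Ropp_plus_distr Ropp_0).
rewrite (reindex_inj (@rev_ord_inj N)) /=.
rewrite (eq_bigr D); last by move=> j _; rewrite rev_ordK.
have HP : forall j : 'I_N, (N - j.+1 < m)%N = ~~ (j < N - m)%N.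
  move=> j; have Hj := ltn_ord j; apply/idP/idP; lia.
have HP' : (fun j : 'I_N => (N - j.+1 < m)%N) =1 (fun j => ~~ (j < N - m)%N) by move=> j; exact: HP.
rewrite (eq_bigl _ _ HP').
have Hall : \big[Rplus/0]_(j < N) D j = 0.
  rewrite /D (reindex_inj (@perm_inj _ s^-1)) /=.
  rewrite (eq_bigr (fun j => x j - mu)); last by move=> j _; rewrite permKV.
  rewrite /Rminus big_split /= sumR_const.
  have -> : #|(fun _ : 'I_N => true)| = N by rewrite -[RHS](card_ord N); apply: eq_card.
  have HN' : 0 < INR N by apply: lt_0_INR; apply/ltP.
  rewrite /mu /pmean.
  have E : forall y, y + INR N * - (y / INR N) = 0 by move=> y; field; lra.
  apply: E.
move: Hall; rewrite (bigID (fun j : 'I_N => (j < N - m)%N)) /= => H.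
have E : forall u v : R, u + v = 0 -> - v = u by move=> u v; lra.
exact: E H.
Qed.

Lemma cmp_exp {A B S W T : R} : 0 < W -> 0 < S -> S <= B -> 0 <= A ->
  - (A / (W * B)) = T -> exp (- (A / (W * S))) <= exp T.
Proof.
move=> HW HS HSB HA <-. apply: exp_mono. apply: Ropp_le_contravar.
apply: Rmult_le_compat_l => //. apply: Rinv_le_contravar.
  by apply: Rmult_lt_0_compat.
by apply: Rmult_le_compat_l; lra.
Qed.

Theorem theorem1 (N : nat) (x : 'I_N -> R) (a b : R) (n : nat) (eps : R) :
  (2 <= N)%N ->
  (forall i, a <= x i) -> (exists i, x i = a) ->
  (forall i, x i <= b) -> (exists i, x i = b) ->
  (1 <= n)%N -> (n < N)%N -> 0 < eps ->
  Prob (fun s : {perm 'I_N} =>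
          exists k : nat, (n <= k <= N.-1)%N /\ psum x s k / INR k >= eps)
    <= exp (- (2 * INR n * eps ^ 2)
              / ((1 - INR n / INR N) * (1 + 1 / INR n) * (b - a) ^ 2))
  /\
  Prob (fun s : {perm 'I_N} =>
          exists k : nat, (1 <= k <= n)%N /\
             psum x s k / INR (N - k)%N >= INR n * eps / INR (N - n)%N)
    <= exp (- (2 * INR n * eps ^ 2)
              / ((1 - (INR n - 1) / INR N) * (b - a) ^ 2)).
Proof.
move=> HN Ha [ia Hia] Hb [ib Hib] Hn1 HnN Heps.
have HN0 : (0 < N)%N by lia.
have HNR : 0 < INR N by apply: lt_0_INR; apply/ltP.
have HnR : 1 <= INR n by rewrite -/(INR 1); apply: le_INR; apply/leP.
have HNn : INR (N - n) = INR N - INR n by rewrite minus_INR //; apply/leP; lia.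
have HNnpos : 0 < INR (N - n) by apply: lt_0_INR; apply/ltP; lia.
have Hab : a <= b by have := Hb ia; lra.
case: (Rle_lt_or_eq_dec _ _ Hab) => [Hlt|Heq]; last first.
  subst b.
  have Hx : forall i, x i = a by move=> i; have := Ha i; have := Hb i; lra.
  have Hmu : pmean x = a.
    rewrite /pmean (eq_bigr (fun _ => a)); last by move=> i _; rewrite Hx.
    rewrite sumR_const.
    have -> : #|(fun _ : 'I_N => true)| = N by rewrite -[RHS](card_ord N); apply: eq_card.
    field; lra.
  have Hps : forall s k, psum x s k = 0.
    move=> s k; rewrite /psum big1 // => i _; rewrite Hx Hmu; ring.
  split.
    rewrite Prob_zero; first by left; apply: exp_pos.
    move=> s [k [_ H]]; rewrite Hps /Rdiv Rmult_0_l in H; lra.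
  rewrite Prob_zero; first by left; apply: exp_pos.
  move=> s [k [_ H]]; rewrite Hps /Rdiv Rmult_0_l in H.
  have : 0 < INR n * eps / INR (N - n) by apply: Rdiv_lt_0_compat => //; apply: Rmult_lt_0_compat; lra.
  lra.
have Hx : forall i, a <= x i <= b by move=> i; split.
have HW : 0 < (b - a) ^ 2 by apply: pow_lt; lra.
split.
- (* first inequality, via reversal *)
  pose y := fun i => - x i.
  have Hy : forall i, - b <= y i <= - a by move=> i; rewrite /y; have := Hx i; lra.
  have HM1 : (1 <= N - n)%N by lia.
  have HM2 : (N - n < N)%N by lia.
  have Hg := gen N y (- b) (- a) (N - n) eps HN0 (Ropp_lt_contravar _ _ Hlt) Hy HM1 HM2 Heps.
  have EP : Prob (fun s : {perm 'I_N} =>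
          exists k : nat, (n <= k <= N.-1)%N /\ psum x s k / INR k >= eps) =
     Prob (fun s : {perm 'I_N} => exists k, (1 <= k <= N - n)%N /\ psum y s k / INR (N - k) >= eps).
    rewrite /Prob; congr (INR _ / _).
    rewrite -!sum1_card [RHS](reindex_inj (mulgI (perm (@rev_ord_inj N)))) /=.
    apply: eq_bigl => s; rewrite !inE; apply: pbool_iff; split.
      move=> [k [Hk H]]; exists (N - k)%N; split; first by lia.
      rewrite rev_psum //; last by lia.
      by rewrite (_ : (N - (N - k) = k)%N) //; lia.
    move=> [m [Hm H]]; exists (N - m)%N; split; first by lia.
    by rewrite -rev_psum //; lia.
  rewrite EP; apply: (Rle_trans _ _ _ Hg).
  rewrite (_ : - a - - b = b - a); last by ring.
  apply: (cmp_exp (B := INR (N - n) * (INR n + 1) / ((INR n + INR (N - n)) * INR n ^ 2))) => //.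
  + apply: Sf_pos; lia.
  + rewrite Sf_Tf; last by lia.
    rewrite (_ : (N - (N - n) = n)%N); last by lia.
    by apply: Tf_bound.
  + by apply: Rmult_le_pos; [lra|apply: pow2_ge_0].
  + rewrite HNn. field; repeat split; lra.
-
  have Hc : 0 < INR n * eps / INR (N - n) by apply: Rdiv_lt_0_compat => //; apply: Rmult_lt_0_compat; lra.
  have Hg := gen N x a b n (INR n * eps / INR (N - n)) HN0 Hlt Hx Hn1 HnN Hc.
  apply: (Rle_trans _ _ _ Hg).
  apply: (cmp_exp (B := INR n * (INR (N - n) + 1) / ((INR (N - n) + INR n) * INR (N - n) ^ 2))) => //.
  + by apply: Sf_pos.
  + rewrite Sf_Tf; last by lia.
    apply: Tf_bound; lia.
  + by apply: Rmult_le_pos; [lra|apply: pow2_ge_0].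
  + rewrite HNn. field; repeat split; lra.
Qed.
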